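(* Let $S\subseteq\mathbb N^d$ be a good semigroup, $E\subsetneq S$ a proper good ideal, and $A=S\setminus E=\bigcup_{i=1}^NA_i$ its partition into levels. Let $\boldsymbol\alpha\in A_i$ with $i<N$. Then for every $k=1,\dots,d$ there exists $\boldsymbol\beta^{(k)}\in A_{i+1}$ with $\boldsymbol\beta^{(k)}\ge\boldsymbol\alpha$ and $\beta^{(k)}_k>\alpha_k$.
   Context: Notation: on $\mathbb{Z}^d$, $\le$ componentwise, $\boldsymbol\alpha\ll\boldsymbol\beta$ means $\alpha_i<\beta_i$ for all $i$, $\boldsymbol\alpha\le\le\boldsymbol\beta$ means $=$ or $\ll$, $\wedge$ componentwise minimum, $I=\{1,\dots,d\}$, $\Delta^S_F(\boldsymbol\alpha)=\{\boldsymbol\beta\in S:\beta_i=\alpha_i\ (i\in F),\ \beta_j>\alpha_j\ (j\notin F)\}$. A good semigroup is a submonoid $S$ of $(\mathbb{N}^d,+)$ closed under $\wedge$ (G1), satisfying (G2): if $\boldsymbol\alpha\neq\boldsymbol\beta\in S$ and $\alpha_i=\beta_i$, there is $\boldsymbol\epsilon\in S$ with $\epsilon_i>\alpha_i$, $\epsilon_j\ge\min\{\alpha_j,\beta_j\}$ for $j\ne i$, with equality if $\alpha_j\ne\beta_j$; and (G3): $\boldsymbol c+\mathbb N^d\subseteq S$ for some $\boldsymbol c$. A good ideal is $E\subseteq S$ with $E+S\subseteq E$ satisfying (G1)–(G3). Levels: $\boldsymbol\alpha\in B$ is a complete infimum of $\boldsymbol\beta^{(1)},\dots,\boldsymbol\beta^{(r)}\in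 B$ ($r\ge2$) if $\boldsymbol\beta^{(j)}\in\Delta^S_{F_j}(\boldsymbol\alpha)$ with $\emptyset\ne F_j\subsetneq I$, $\boldsymbol\beta^{(j)}\wedge\boldsymbol\beta^{(k)}=\boldsymbol\alpha$ ($j\ne k$), $\bigcap F_j=\emptyset$. $B^{(1)}$ = maximal elements of $A$ for $\le\le$, $C^{(1)}$ = those that are complete infima of $r$ elements of $B^{(1)}$ ($1<r\le d$), $D^{(1)}=B^{(1)}\setminus C^{(1)}$; inductively for $A\setminus\bigcup_{j<i}D^{(j)}$; $A=\bigsqcup_{i=1}^ND^{(i)}$, $A_i=D^{(N+1-i)}$. *)

(* Defs.v *)
From mathcomp Require Import all_boot.
Set Implicit Arguments. Unset Strict Implicit. Unset Printing Implicit Defensive.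

(* Elements of N^d, indexed by I = 'I_d (0-based coordinates). *)
Definition vec (d : nat) := {ffun 'I_d -> nat}.

Section Defs.
Variable d : nat.
Implicit Types (a b c v : vec d) (X S E A B : vec d -> Prop).

Definition vzero : vec d := [ffun _ => 0].
Definition vadd a b : vec d := [ffun i => a i + b i].
Definition vmeet a b : vec d := [ffun i => minn (a i) (b i)].
Definition vle a b := forall i, a i <= b i.
Definition vll a b := forall i, a i < b i.

Definition G1 X := forall a b, X a -> X b -> X (vmeet a b).
Definition G2 X := forall a b, X a -> X b -> a <> b -> forall i : 'I_d, a i = b i ->
  exists e, X e /\ a i < e i /\
    forall j : 'I_d, j <> i ->
      minn (a j) (b j) <= e j /\ (a j <> b j -> e j = minn (a j) (b j)).
Definition G3 X := exists c, forall v, vle c v -> X v.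

Definition good_semigroup S :=
  [/\ S vzero, (forall a b, S a -> S b -> S (vadd a b)), G1 S, G2 S & G3 S].

Definition good_ideal S E :=
  [/\ (forall a, E a -> S a), (forall a b, E a -> S b -> E (vadd a b)),
      G1 E, G2 E & G3 E].

Definition Adiff S E := fun a => S a /\ ~ E a.

Definition Delta S (F : {set 'I_d}) a b :=
  S b /\ forall i : 'I_d, (i \in F -> b i = a i) /\ (i \notin F -> a i < b i).

Definition complete_infimum S B a (r : nat) (bt : 'I_r -> vec d) :=
  [/\ 2 <= r, B a, (forall j, B (bt j)) &
   exists F : 'I_r -> {set 'I_d},
     [/\ forall j, F j != set0 /\ F j != setT /\ Delta S (F j) a (bt j),
         forall j k, j <> k -> vmeet (bt j) (bt k) = a &
         \bigcap_(j < r) F j = set0]].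

Definition maxel X a := X a /\ forall b, X b -> ~ vll a b.

Definition Cset S B a :=
  B a /\ exists r, (1 < r <= d) /\ exists bt : 'I_r -> vec d, complete_infimum S B a bt.

Definition Dset S X a := maxel X a /\ ~ Cset S (maxel X) a.

(* remA S A n = A \ (D^(1) u ... u D^(n))  (so remA 0 = A) *)
Fixpoint remA S A (n : nat) : vec d -> Prop :=
  match n with
  | 0 => A
  | n'.+1 => fun a => remA S A n' a /\ ~ Dset S (remA S A n') a
  end.

Definition levelD S A (i : nat) := Dset S (remA S A i.-1).

Definition num_levels S A (N : nat) :=
  (forall a, ~ remA S A N a) /\ (forall n, n < N -> exists a, remA S A n a).

Definition level S A (N i : nat) := levelD S A (N.+1 - i).

End Defs.

(* Main.v *)
From Stdlib Require Import Classical.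
Require Import Defs.
From mathcomp Require Import all_boot.
From mathcomp Require Import zify.


Section Aux.
Variable d : nat.
Implicit Types (E V X S : vec d -> Prop).

Lemma iter_up E V (c : vec d) :
  (forall v, vle c v -> E v) -> (forall z, V z -> ~ E z) ->
  (forall z (l : 'I_d), V z -> exists z', V z' /\ vle z z' /\ z l < z' l) ->
  forall z, V z -> False.
Proof.
move=> hc hV hs.
have hn : forall n z (l : 'I_d), V z -> exists z', V z' /\ vle z z' /\ z l + n <= z' l.
  elim=> [|n IH] z l Vz; first by exists z; split=> //; split=> [j|]; rewrite ?addn0.
  have [z1 [V1 [le1 lt1]]] := IH z l Vz.
  have [z2 [V2 [le2 lt2]]] := hs z1 l V1.
  exists z2; split=> //; split; first by move=> j; apply: leq_trans (le1 j) (le2 j).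
  by rewrite addnS; apply: leq_trans lt2; rewrite ltnS.
have hsq : forall (s : seq 'I_d) z, V z -> exists w, V w /\ vle z w /\
    forall l, l \in s -> c l <= w l.
  elim=> [|l s IH] z Vz; first by exists z; split=> //; split=> // j.
  have [w [Vw [lew hw]]] := IH z Vz.
  have [w' [Vw' [lew' hw']]] := hn (c l) w l Vw.
  exists w'; split=> //; split; first by move=> j; apply: leq_trans (lew j) (lew' j).
  move=> j; rewrite inE => /orP [/eqP ->|js].
    by apply: leq_trans hw'; apply: leq_addl.
  by apply: leq_trans (hw j js) (lew' j).
move=> z Vz.
have [w [Vw [_ hw]]] := hsq (enum 'I_d) z Vz.
apply: (hV w Vw); apply: hc => j; apply: hw; by rewrite mem_enum.
Qed.

Lemma step S X z (l : 'I_d) : X z -> ~ Dset S X z ->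
  exists z', X z' /\ vle z z' /\ z l < z' l.
Proof.
move=> Xz nD.
case: (classic (maxel X z)) => hm.
  have hC : Cset S (maxel X) z by apply: NNPP => hC; apply: nD.
  case: hC => _ [r [_ [bt [_ _ hB [F [hF _ hcap]]]]]].
  have : exists j, l \notin F j.
    apply: NNPP => hne.
    have : l \in \bigcap_(j < r) F j.
      apply/bigcapP => j _; apply: NNPP => hj; apply: hne; by exists j; apply/negP.
    by rewrite hcap inE.
  case=> j hj.
  have [_ [_ [_ hD]]] := hF j.
  exists (bt j); split; first by case: (hB j).
  split; last by case: (hD l) => _ /(_ hj).
  move=> i; case: (hD i) => h1 h2.
  case: (boolP (i \in F j)) => hi; first by rewrite (h1 hi).
  by apply: ltnW; apply: h2.
have [b [Xb hb]] : exists b, X b /\ vll z b.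
  apply: NNPP => hn; apply: hm; split=> // b Xb hzb; apply: hn; by exists b.
exists b; split=> //; split=> [i|]; [exact: ltnW | exact: hb].
Qed.

Lemma remA_sub S A n a : remA S A n a -> A a.
Proof. by elim: n a => [|n IH] a //= [/IH]. Qed.

End Aux.

Theorem lemma3p5 (d : nat) (S E : vec d -> Prop) :
  good_semigroup S -> good_ideal S E -> (exists s, S s /\ ~ E s) ->
  forall N : nat, num_levels S (Adiff S E) N ->
  forall i : nat, 1 <= i < N ->
  forall a : vec d, level S (Adiff S E) N i a ->
  forall k : 'I_d, exists b : vec d,
    level S (Adiff S E) N i.+1 b /\ vle a b /\ a k < b k.
Proof.
move=> _ [_ _ _ _ [c hc]] _ N _ i /andP [i1 iN] a.
rewrite /level /levelD.
have -> : (N.+1 - i).-1 = (N - i.+1).+1 by move: iN; clear; lia.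
have -> : (N.+1 - i.+1).-1 = N - i.+1 by move: iN; clear; lia.
set X := remA S (Adiff S E) (N - i.+1).
move=> [[] [Xa nDa] _ _] k.
apply: NNPP => hno.
have [z0 [Xz0 [le0 lt0]]] := @step d S X a k Xa nDa.
pose V := fun z => X z /\ vle a z /\ a k < z k.
apply: (@iter_up d E V c hc _ _ z0) => //.
- move=> z [Xz _]; by case: (@remA_sub d S (Adiff S E) _ z Xz).
- move=> z l [Xz [lez ltz]].
  have nD : ~ Dset S X z by move=> hD; apply: hno; exists z.
  have [z' [Xz' [le' lt']]] := @step d S X z l Xz nD.
  exists z'; split=> //; split=> //; split; first by move=> j; apply: leq_trans (lez j) (le' j).
  by apply: leq_trans ltz (le' k).
Qed.
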